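(* Let $\mathcal{C}$ and $\mathcal{D}$ be classes of countable structures axiomatized by $\mathfrak{L}_{\omega_1\omega}$-sentences, regarded as categories whose morphisms are the embeddings between structures, and let $X_{\mathcal C}$, $X_{\mathcal D}$ be the corresponding standard Borel spaces of structures with universe $\mathbb{N}$ (with the logic action of $S_\infty$). Suppose $F:\mathcal{C}\to\mathcal{D}$ is a full embedding such that (i) $F$ maps objects with universe $\omega$ to objects with universe $\omega$, and (ii) there is a Borel function $f:X_{\mathcal C}\to X_{\mathcal D}$ with $f(x)\cong F(x)$ for every $x\in X_{\mathcal C}$. Then $\cong_{\mathcal C}\ \le_{\mathrm{SPB}}\ \cong_{\mathcal D}$, witnessed by $f$; in particular $\mathrm{Aut}(x)\cong\mathrm{Aut}(f(x))$ for every $x\in X_{\mathcal C}$.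
   Context: A full embedding of categories $F:\mathcal C\to\mathcal D$ is a functor that is injective on objects and such that for all objects $a,b$ the map $\mathrm{Hom}_{\mathcal C}(a,b)\to\mathrm{Hom}_{\mathcal D}(F(a),F(b))$, $h\mapsto F(h)$, is a bijection. For a Polish group $G$ with Borel actions on standard Borel spaces $X,Y$ with orbit equivalence relations $E_a,E_b$, $E_a\le_{\mathrm{SPB}}E_b$ (stabilizer-preserving Borel reduction) means there is a Borel $f:X\to Y$ with $x\,E_a\,y\iff f(x)\,E_b\,f(y)$ for all $x,y$, and such that the stabilizers $G_x$ and $G_{f(x)}$ are isomorphic groups for every $x\in X$. For $G=S_\infty$ acting on spaces of countable structures, this means $\mathrm{Aut}(x)\cong\mathrm{Aut}(f(x))$ for all $x$. $\cong_{\mathcal C}$ denotes isomorphism on $X_{\mathcal C}$. *)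

(* Defs.v *)
From mathcomp Require Import all_boot.
From Stdlib Require Import ProofIrrelevance.

Set Implicit Arguments.
Unset Strict Implicit.
Unset Printing Implicit Defensive.

Record Sig := {
  sym : Type;
  ar : sym -> nat;
  sym_countable : exists c : sym -> nat, injective c }.

Record Struc (L : Sig) := {
  car : Type;
  car_countable : exists c : car -> nat, injective c;
  rel : forall s : sym L, ('I_(ar s) -> car) -> bool }.

Arguments rel {L} _ _ _.

Definition is_emb (L : Sig) (M N : Struc L) (h : car M -> car N) : Prop :=
  injective h /\ forall (s : sym L) (t : 'I_(ar s) -> car M), rel N s (h \o t) = rel M s t.

Definition Emb (L : Sig) (M N : Struc L) := {h : car M -> car N | is_emb h}.

Lemma is_emb_id (L : Sig) (M : Struc L) : is_emb (M := M) (N := M) id.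
Proof. split; [exact: inj_id | by []]. Qed.

Definition emb_id (L : Sig) (M : Struc L) : Emb M M := exist _ id (is_emb_id M).

Lemma is_emb_comp (L : Sig) (M N P : Struc L) (g : car N -> car P) (h : car M -> car N) :
  is_emb g -> is_emb h -> is_emb (g \o h).
Proof.
move=> [gi gr] [hi hr]; split; first exact: inj_comp.
by move=> s t; rewrite -hr -gr.
Qed.

Definition emb_comp (L : Sig) (M N P : Struc L) (g : Emb N P) (h : Emb M N) : Emb M P :=
  exist _ (sval g \o sval h) (is_emb_comp (proj2_sig g) (proj2_sig h)).

Definition is_iso (L : Sig) (M N : Struc L) (h : car M -> car N) : Prop :=
  is_emb h /\ forall y : car N, exists x : car M, h x = y.

Definition isomorphic (L : Sig) (M N : Struc L) : Prop :=
  exists h : car M -> car N, is_iso h.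

Definition Aut (L : Sig) (M : Struc L) := {h : car M -> car M | is_iso h}.

Lemma is_iso_comp (L : Sig) (M : Struc L) (g h : car M -> car M) :
  is_iso g -> is_iso h -> is_iso (g \o h).
Proof.
move=> [ge gs] [he hs]; split; first exact: is_emb_comp.
move=> y; have [z <-] := gs y; have [x <-] := hs z; by exists x.
Qed.

Definition aut_comp (L : Sig) (M : Struc L) (a b : Aut M) : Aut M :=
  exist _ (sval a \o sval b) (is_iso_comp (proj2_sig a) (proj2_sig b)).

Definition group_isomorphic (L1 L2 : Sig) (M : Struc L1) (N : Struc L2) : Prop :=
  exists Phi : Aut M -> Aut N,
    bijective Phi /\ forall a b : Aut M, Phi (aut_comp a b) = aut_comp (Phi a) (Phi b).

Definition XL (L : Sig) := forall s : sym L, ('I_(ar s) -> nat) -> bool.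

Definition struc_of (L : Sig) (x : XL L) : Struc L :=
  {| car := nat; car_countable := ex_intro _ id (@inj_id nat); rel := x |}.

(* Borel sets of X_L: sigma-algebra generated by the subbasic clopen sets
   {x | x s t = b} of the product topology on 2^(disjoint union of N^(ar s)). *)
Inductive borel (L : Sig) : (XL L -> Prop) -> Prop :=
| borel_basic (s : sym L) (t : 'I_(ar s) -> nat) (b : bool) :
    borel (fun x => x s t = b)
| borel_compl (A : XL L -> Prop) : borel A -> borel (fun x => ~ A x)
| borel_union (A : nat -> XL L -> Prop) :
    (forall n, borel (A n)) -> borel (fun x => exists n, A n x).

Definition borel_fun_on (L1 L2 : Sig) (P : XL L1 -> Prop) (f : XL L1 -> XL L2) : Prop :=
  forall B : XL L2 -> Prop, borel B ->
    exists A : XL L1 -> Prop, borel A /\ forall x, P x -> (B (f x) <-> A x).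

Inductive formula (L : Sig) : Type :=
| FRel (s : sym L) (t : 'I_(ar s) -> nat)
| FEq (i j : nat)
| FNot (p : formula L)
| FConj (ps : nat -> formula L)
| FEx (i : nat) (p : formula L).

Fixpoint sat (L : Sig) (M : Struc L) (v : nat -> car M) (p : formula L) : Prop :=
  match p with
  | FRel s t => rel M s (v \o t)
  | FEq i j => v i = v j
  | FNot q => ~ sat v q
  | FConj ps => forall n, sat v (ps n)
  | FEx i q => exists a : car M, sat (fun k => if k == i then a else v k) q
  end.

Fixpoint free_in (L : Sig) (k : nat) (p : formula L) : Prop :=
  match p with
  | FRel s t => exists j, t j = k
  | FEq i j => i = k \/ j = k
  | FNot q => free_in k q
  | FConj ps => exists n, free_in k (ps n)
  | FEx i q => k <> i /\ free_in k q
  end.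

Definition sentence (L : Sig) (p : formula L) : Prop := forall k, ~ free_in k p.

(* M |= phi  (structures are nonempty, as usual in model theory) *)
Definition models (L : Sig) (M : Struc L) (p : formula L) : Prop :=
  (exists a : car M, True) /\ forall v : nat -> car M, sat v p.

Definition Xmod (L : Sig) (p : formula L) : XL L -> Prop :=
  fun x => models (struc_of x) p.

Record full_embedding (LC LD : Sig) (C : Struc LC -> Prop) (D : Struc LD -> Prop)
    (Fo : Struc LC -> Struc LD)
    (Fm : forall M N : Struc LC, Emb M N -> Emb (Fo M) (Fo N)) : Prop := {
  fe_obj : forall M, C M -> D (Fo M);
  fe_id : forall M, C M -> Fm M M (emb_id M) = emb_id (Fo M);
  fe_comp : forall M N P, C M -> C N -> C P ->
      forall (g : Emb N P) (h : Emb M N),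
      Fm M P (emb_comp g h) = emb_comp (Fm N P g) (Fm M N h);
  fe_inj : forall M N, C M -> C N -> Fo M = Fo N -> M = N;
  fe_full : forall M N, C M -> C N -> bijective (Fm M N) }.

(* f witnesses  E_P <=_SPB E_Q  for isomorphism on the subspaces P, Q.
   For the logic action of S_infinity, the stabilizer of x is Aut(x). *)
Definition SPB_witness (L1 L2 : Sig) (P : XL L1 -> Prop) (Q : XL L2 -> Prop)
    (f : XL L1 -> XL L2) : Prop :=
  borel_fun_on P f /\
  (forall x, P x -> Q (f x)) /\
  (forall x y, P x -> P y ->
     (isomorphic (struc_of x) (struc_of y) <-> isomorphic (struc_of (f x)) (struc_of (f y)))) /\
  (forall x, P x -> group_isomorphic (struc_of x) (struc_of (f x))).

Arguments full_embedding {LC LD} C D Fo Fm.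

(* Main.v *)
Require Import Defs.
From mathcomp Require Import all_boot.
From Stdlib Require Import FunctionalExtensionality ClassicalEpsilon ProofIrrelevance.

Set Implicit Arguments.
Unset Strict Implicit.
Unset Printing Implicit Defensive.

Lemma emb_eq (L : Sig) (M N : Struc L) (e1 e2 : Emb M N) : sval e1 = sval e2 -> e1 = e2.
Proof.
case: e1 e2 => [a pa] [b pb] /= E; subst b; f_equal; apply: proof_irrelevance.
Qed.

Lemma aut_eq (L : Sig) (M : Struc L) (e1 e2 : Aut M) : sval e1 = sval e2 -> e1 = e2.
Proof.
case: e1 e2 => [a pa] [b pb] /= E; subst b; f_equal; apply: proof_irrelevance.
Qed.

Lemma iso_inv (L : Sig) (M N : Struc L) (h : car M -> car N) :
  is_iso h -> exists g : car N -> car M, is_iso g /\ cancel h g /\ cancel g h.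
Proof.
move=> [[hi hr] hs].
pose g y := proj1_sig (constructive_indefinite_description _ (hs y)).
have gK : cancel g h by move=> y; rewrite /g; case: constructive_indefinite_description.
have hK : cancel h g by move=> x; apply: hi; rewrite gK.
exists g; split; last by [].
split; last by move=> x; exists (h x); rewrite hK.
split; first exact: can_inj gK.
move=> s t; rewrite -hr; congr (Defs.rel _ s); apply: functional_extensionality => i /=; by rewrite gK.
Qed.

Lemma iso_comp (L : Sig) (M N P : Struc L) (g : car N -> car P) (h : car M -> car N) :
  is_iso g -> is_iso h -> is_iso (g \o h).
Proof.
move=> [ge gs] [he hs]; split; first exact: is_emb_comp.
move=> y; have [z <-] := gs y; have [x <-] := hs z; by exists x.
Qed.

Lemma iso_of_inv (L : Sig) (M N : Struc L) (h : car M -> car N) (g : car N -> car M) :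
  is_emb h -> cancel g h -> is_iso h.
Proof. by move=> he gK; split => // y; exists (g y). Qed.

Lemma upd_comp (A B : Type) (h : A -> B) (i : nat) (a : A) (v : nat -> A) :
  h \o (fun k => if k == i then a else v k) = (fun k => if k == i then h a else (h \o v) k).
Proof. apply: functional_extensionality => k /=; by case: (k == i). Qed.

Lemma sat_iso (L : Sig) (M N : Struc L) (h : car M -> car N) :
  is_iso h -> forall p v, sat v p <-> sat (h \o v) p.
Proof.
move=> [[hi hr] hs] p; elim: p => [s t|i j|p IH|ps IH|i p IH] v /=.
- rewrite (_ : (h \o v) \o t = h \o (v \o t)) // hr; by split.
- split; [by move=> ->| by move/hi].
- split=> H H'; apply: H; [exact/(IH v).2 | exact/(IH v).1].
- split=> H n; [exact/(IH n v).1 | exact/(IH n v).2].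
- split.
  + move=> [a Ha]; exists (h a); rewrite -upd_comp; exact/(IH _).1.
  + move=> [b Hb]; have [a Ea] := hs b; exists a; apply/(IH _).2.
    by rewrite upd_comp Ea.
Qed.

Lemma models_iso (L : Sig) (M N : Struc L) (h : car M -> car N) (p : formula L) :
  is_iso h -> models M p -> models N p.
Proof.
move=> hiso [[a _] Hm]; split; first by exists (h a).
have [g [giso [hK gK]]] := iso_inv hiso.
move=> v; have -> : v = h \o (g \o v).
  by apply: functional_extensionality => k /=; rewrite gK.
exact: (sat_iso hiso p (g \o v)).1 (Hm _).
Qed.

Lemma Fm_iso (LC LD : Sig) (C : Struc LC -> Prop) (D : Struc LD -> Prop) Fo Fm
  (hF : full_embedding C D Fo Fm) (M N : Struc LC) (CM : C M) (CN : C N)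
  (h : Emb M N) : is_iso (sval h) -> is_iso (sval (Fm M N h)).
Proof.
move=> hiso; have [g [giso [hK gK]]] := iso_inv hiso.
pose ge : Emb N M := exist _ g (proj1 giso).
have E1 : emb_comp h ge = emb_id N.
  apply: emb_eq; apply: functional_extensionality => y /=; by rewrite gK.
have := fe_comp hF CN CM CN h ge; rewrite E1 (fe_id hF CN) => E.
apply: (@iso_of_inv _ _ _ _ (sval (Fm N M ge))); first exact: proj2_sig.
move=> y; have := f_equal (fun e => sval e y) E; by [].
Qed.

Lemma Fm_refl (LC LD : Sig) (C : Struc LC -> Prop) (D : Struc LD -> Prop) Fo Fm
  (hF : full_embedding C D Fo Fm) (M N : Struc LC) (CM : C M) (CN : C N)
  (k : Emb (Fo M) (Fo N)) : is_iso (sval k) ->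
  exists h : Emb M N, is_iso (sval h) /\ Fm M N h = k.
Proof.
move=> kiso; have [k' [k'iso [kK k'K]]] := iso_inv kiso.
pose ke : Emb (Fo N) (Fo M) := exist _ k' (proj1 k'iso).
have [G FG GF] := fe_full hF CM CN.
have [G' FG' GF'] := fe_full hF CN CM.
exists (G k); split; last by [].
have Fi : injective (Fm N N) by have [H1 H2 H3] := fe_full hF CN CN; exact: can_inj H2.
have E : emb_comp (G k) (G' ke) = emb_id N.
  apply: Fi; rewrite (fe_comp hF CN CM CN) (fe_id hF CN) GF GF'.
  apply: emb_eq; apply: functional_extensionality => y /=; by rewrite k'K.
apply: (@iso_of_inv _ _ _ _ (sval (G' ke))); first exact: proj2_sig.
move=> y; have := f_equal (fun e => sval e y) E; by [].
Qed.

Lemma iso_sym (L : Sig) (M N : Struc L) : isomorphic M N -> isomorphic N M.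
Proof. move=> [h hi]; have [g [gi _]] := iso_inv hi; by exists g. Qed.

Lemma iso_trans (L : Sig) (M N P : Struc L) : isomorphic M N -> isomorphic N P -> isomorphic M P.
Proof. move=> [h hi] [g gi]; exists (g \o h); exact: iso_comp. Qed.

Lemma inj_surj_bij (A B : Type) (f : A -> B) :
  injective f -> (forall y, exists x, f x = y) -> bijective f.
Proof.
move=> fi fs.
pose g y := proj1_sig (constructive_indefinite_description _ (fs y)).
have gK : cancel g f by move=> y; rewrite /g; case: constructive_indefinite_description.
exists g => // x; apply: fi; by rewrite gK.
Qed.

Theorem proposition5p6 (LC LD : Sig) (phiC : formula LC) (phiD : formula LD)
  (sentC : sentence phiC) (sentD : sentence phiD)
  (Fo : Struc LC -> Struc LD)
  (Fm : forall M N : Struc LC, Emb M N -> Emb (Fo M) (Fo N))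
  (hF : full_embedding (fun M => models M phiC) (fun N => models N phiD) Fo Fm)
  (homega : forall M : Struc LC, models M phiC -> car M = nat -> car (Fo M) = nat)
  (f : XL LC -> XL LD)
  (fBorel : borel_fun_on (Xmod phiC) f)
  (fF : forall x : XL LC, Xmod phiC x -> isomorphic (struc_of (f x)) (Fo (struc_of x))) :
  SPB_witness (Xmod phiC) (Xmod phiD) f.
Proof.
split; first exact: fBorel.
split.
  move=> x Cx; have [j ji] := iso_sym (fF x Cx).
  exact: models_iso ji (fe_obj hF Cx).
split.
  move=> x y Cx Cy; split.
  - move=> [h hi].
    have FI := Fm_iso hF Cx Cy (h := exist _ h (proj1 hi)) hi.
    apply: iso_trans (fF x Cx) _; apply: iso_trans (iso_sym (fF y Cy)).
    by exists (sval (Fm _ _ (exist _ h (proj1 hi)))).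
  - move=> H.
    have [k ki] : isomorphic (Fo (struc_of x)) (Fo (struc_of y)).
      apply: iso_trans (iso_sym (fF x Cx)) _; exact: iso_trans H (fF y Cy).
    have [h [hi _]] := Fm_refl hF Cx Cy (k := exist _ k (proj1 ki)) ki.
    by exists (sval h).
move=> x Cx.
have [j ji] := fF x Cx.
have [j' [j'i [jK j'K]]] := iso_inv ji.
pose em (a : Aut (struc_of x)) : Emb (struc_of x) (struc_of x) := exist _ (sval a) (proj1 (proj2_sig a)).
pose Phi (a : Aut (struc_of x)) : Aut (struc_of (f x)) :=
  exist _ (j' \o sval (Fm _ _ (em a)) \o j)
    (iso_comp (iso_comp j'i (Fm_iso hF Cx Cx (h := em a) (proj2_sig a))) ji).
exists Phi; split.
  apply: inj_surj_bij.
  - move=> a b E.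
    have E1 : sval (Phi a) = sval (Phi b) by rewrite E.
    have E2 : Fm _ _ (em a) = Fm _ _ (em b).
      apply: emb_eq; apply: functional_extensionality => y.
      have := f_equal (fun g => g (j' y)) E1 => /=.
      by rewrite j'K => /(can_inj j'K) .
    have [G GF _] := fe_full hF Cx Cx.
    have := f_equal G E2; rewrite !GF => E3.
    apply: aut_eq; exact: (f_equal (@sval _ _) E3).
  - move=> c.
    pose k : Emb (Fo (struc_of x)) (Fo (struc_of x)) :=
      exist _ (j \o sval c \o j') (proj1 (iso_comp (iso_comp ji (proj2_sig c)) j'i)).
    have [h [hi Eh]] := Fm_refl hF Cx Cx (k := k) (iso_comp (iso_comp ji (proj2_sig c)) j'i).
    exists (exist _ (sval h) hi); apply: aut_eq => /=.
    have -> : em (exist _ (sval h) hi) = h by apply: emb_eq.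
    rewrite Eh /=; apply: functional_extensionality => y /=; by rewrite !jK.
move=> a b; apply: aut_eq => /=.
have -> : em (aut_comp a b) = emb_comp (em a) (em b) by apply: emb_eq.
rewrite (fe_comp hF Cx Cx Cx) /=.
apply: functional_extensionality => y /=; by rewrite j'K.
Qed.
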